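(* Let $a \leq b$ be natural numbers. Then \[ \alpha(\{a, a+1, \ldots, b\}) \geq \frac{a}{a+b} = \frac{1}{1 + \frac{b}{a}}. \]
   Context: For a finite $D \subset \mathbb{N} = \{1,2,\ldots\}$ and $n \geq 1$, the circulant graph $G_n$ with set of distances $D$ has vertex set $\{0, \ldots, n-1\}$, vertices $u, v$ (possibly equal) being adjacent iff $u - v \equiv d$ or $v - u \equiv d \pmod n$ for some $d \in D$. $\alpha(G)$ is the maximum size of an independent set (no two adjacent vertices, no looped vertex), and $\alpha(D) := \lim_{n\to\infty} \alpha(G_n)/n$ (which exists). *)

(* Defs.v *)
From Stdlib Require Import Reals.
From Coquelicot Require Import Coquelicot.
From mathcomp Require Import all_boot.

Set Implicit Arguments.
Unset Strict Implicit.
Unset Printing Implicit Defensive.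

(* Adjacency in the circulant graph G_n with distance set D (a finite subset
   of {1,2,...}, given as a list): vertices u, v of {0,...,n-1} (possibly
   equal) are adjacent iff u - v = d or v - u = d (mod n) for some d in D. *)
Definition circ_adj (D : seq nat) (n : nat) (u v : 'I_n) : bool :=
  has (fun d => ((v + d) %% n == u %% n) || ((u + d) %% n == v %% n)) D.

(* Independent set: no two (not necessarily distinct) vertices adjacent;
   in particular no looped vertex. *)
Definition circ_indep (D : seq nat) (n : nat) (S : {set 'I_n}) : bool :=
  [forall u in S, forall v in S, ~~ circ_adj D u v].

Definition alpha_circ (D : seq nat) (n : nat) : nat :=
  \max_(S : {set 'I_n} | circ_indep D S) #|S|.

Definition alphaD (D : seq nat) : R :=
  real (Lim_seq (fun n => (INR (alpha_circ D n) / INR n)%R)).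

(* Main.v *)
Require Import Defs.
From Stdlib Require Import Reals Lra.
From Coquelicot Require Import Coquelicot.
From mathcomp Require Import all_boot zify.
From Stdlib Require Import Lra.
Open Scope nat_scope.

Lemma alpha_le (D : seq nat) n : (alpha_circ D n <= n)%N.
Proof.
rewrite /alpha_circ; apply/bigmax_leqP => S _.
by apply: leq_trans (max_card _) _; rewrite card_ord.
Qed.

Lemma alpha_ge a b n : (1 <= a)%N -> (a <= b)%N ->
  (((n - b) %/ (a + b)) * a <= alpha_circ (iota a (b - a).+1) n)%N.
Proof.
move=> ha hab.
set m := (n - b) %/ (a + b).
have hm : (m * (a + b) <= n - b)%N by apply: leq_divM.
have hab0 : (0 < a + b)%N by lia.
pose f (p : 'I_m * 'I_a) : nat := p.1 * (a + b) + p.2.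
have fb : forall p, (f p < m * (a + b))%N.
  move=> [i j] /=; rewrite /f /=.
  have hi := ltn_ord i; have hj := ltn_ord j.
  have : (i.+1 * (a + b) <= m * (a + b))%N by apply: leq_mul.
  lia.
have fn : forall p, (f p < n)%N.
  move=> p; have := fb p; lia.
pose g (p : 'I_m * 'I_a) : 'I_n := Ordinal (fn p).
have ginj : injective g.
  move=> [i j] [i' j'] /(congr1 val) /=; rewrite /f /= => e.
  have hj : (j < a + b)%N by have := ltn_ord j; lia.
  have hj' : (j' < a + b)%N by have := ltn_ord j'; lia.
  have e1 := congr1 (fun x => x %/ (a + b)) e.
  have e2 := congr1 (fun x => x %% (a + b)) e.
  rewrite /= !divnMDl // !divn_small // !addn0 in e1.
  rewrite /= !modnMDl !modn_small // in e2.
  by congr pair; apply: val_inj.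
set S := [set g p | p in predT].
have cS : #|S| = (m * a)%N.
  by rewrite card_imset // card_prod !card_ord.
rewrite -cS /alpha_circ.
suff iS : circ_indep (iota a (b - a).+1) S.
  by apply: (@leq_bigmax_cond _ (fun S0 : {set 'I_n} => circ_indep (iota a (b - a).+1) S0) (fun S0 : {set 'I_n} => #|S0|) S iS).
apply/forallP => u; apply/implyP => /imsetP [[i j] _ ->].
apply/forallP => v; apply/implyP => /imsetP [[i' j'] _ ->].
apply/hasPn => d; rewrite mem_iota => /andP [hd1 hd2].
have hi := ltn_ord i; have hj := ltn_ord j.
have hi' := ltn_ord i'; have hj' := ltn_ord j'.
rewrite /= /f /=.
have H1 : (i * (a + b) + j < m * (a + b))%N by apply: (fb (i, j)).
have H2 : (i' * (a + b) + j' < m * (a + b))%N by apply: (fb (i', j')).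
rewrite !(@modn_small _ n); try lia.
apply/negP => /orP [] /eqP e.
- have [le|lt] := leqP i i'.
  + have : (i * (a + b) <= i' * (a + b))%N by apply: leq_mul.
    lia.
  + have : ((i'.+1) * (a + b) <= i * (a + b))%N by apply: leq_mul.
    lia.
- have [le|lt] := leqP i' i.
  + have : (i' * (a + b) <= i * (a + b))%N by apply: leq_mul.
    lia.
  + have : ((i.+1) * (a + b) <= i' * (a + b))%N by apply: leq_mul.
    lia.
Qed.

Open Scope R_scope.
Lemma real_ineq A B N M Al : 1 <= A -> A <= B -> 1 <= N -> N < (M+1)*(A+B)+B ->
  M * A <= Al -> A/(A+B) - (A*(A+2*B)/(A+B)) * / N <= Al / N.
Proof.
intros hA hB hN hNM hAl.
assert (h1 : M * A / N <= Al / N).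
{ unfold Rdiv. apply Rmult_le_compat_r; [left; apply Rinv_0_lt_compat; lra|lra]. }
assert (h2 : M * A / N - (A/(A+B) - (A*(A+2*B)/(A+B)) * / N) = A*(M*(A+B) - N + A + 2*B) / ((A+B)*N)).
{ field. lra. }
assert (h3 : 0 <= A*(M*(A+B) - N + A + 2*B) / ((A+B)*N)).
{ unfold Rdiv. apply Rmult_le_pos. apply Rmult_le_pos; nra. left; apply Rinv_0_lt_compat; nra. }
lra.
Qed.

Theorem proposition3 (a b : nat) (ha : (1 <= a)%N) (hab : (a <= b)%N) :
  (INR a / INR (a + b) <= alphaD (iota a (b - a).+1))%R.
Proof.
set D := iota a (b - a).+1.
set u := fun n => INR (alpha_circ D n) / INR n.
have hA : 1 <= INR a by apply: (le_INR 1); apply/leP.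
have hB : INR a <= INR b by apply: le_INR; apply/leP.
have eab : INR (a + b) = INR a + INR b by exact: (plus_INR a b).
set K := INR a * (INR a + 2 * INR b) / (INR a + INR b).
set c := INR a / INR (a + b).
have hl : is_lim_seq (fun n => c - K * / INR n) c.
  have h0 : is_lim_seq (fun n => / INR n) 0.
    have := is_lim_seq_inv _ _ is_lim_seq_INR ltac:(discriminate).
    by [].
  have := is_lim_seq_minus' _ _ _ _ (is_lim_seq_const c) (is_lim_seq_scal_l _ K _ h0).
  by rewrite /= Rmult_0_r Rminus_0_r.
have low : Rbar_le (Rbar.Finite c) (Lim_seq u).
  rewrite -(is_lim_seq_unique _ _ hl).
  apply: Lim_seq_le_loc; exists 1%nat => n hn.
  have hn' : (1 <= n)%N by apply/leP.
  rewrite /u /c eab /K.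
  apply: (@real_ineq _ _ _ (INR ((n - b) %/ (a + b)))) => //.
  - by apply: (le_INR 1).
  - have H : (n < (S ((n - b) %/ (a + b))) * (a + b) + b)%coq_nat.
      have := @ltn_ceil (n - b) (a + b) ltac:(lia); lia.
    apply lt_INR in H; rewrite plus_INR mult_INR S_INR in H.
    by rewrite -eab.
  - rewrite -mult_INR; apply: le_INR; apply/leP; exact: alpha_ge.
have up : Rbar_le (Lim_seq u) (Rbar.Finite 1).
  rewrite -(Lim_seq_const 1).
  apply: Lim_seq_le_loc; exists 1%nat => n hn.
  have hn' : (1 <= n)%N by apply/leP.
  rewrite /u.
  have h1 : 0 < INR n by apply: (lt_INR 0); apply/ltP.
  have h2 : INR (alpha_circ D n) <= INR n by apply: le_INR; apply/leP; exact: alpha_le.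
  apply (Rmult_le_reg_r (INR n)) => //.
  rewrite /Rdiv Rmult_assoc Rinv_l; lra.
rewrite /alphaD -/D -/u.
move: low up; case: (Lim_seq u) => //= x.
Qed.
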